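(* For every rational number $\ell > 1$ there exists an integer $N(\ell)$ such that for every integer $m > N(\ell)$ for which $\ell \cdot m$ is an integer, the complete bipartite graph $K_{m,\ell\cdot m}$ is not stable, i.e., its independence polynomial has a root $z$ with $\mathrm{Re}(z) > 0$.
   Context: For a simple graph $G$, the independence polynomial is $i(G,x)=\sum_{k=0}^{\alpha(G)} i_k(G)x^k$, where $i_k(G)$ is the number of independent sets of size $k$ in $G$ (with $i_0(G)=1$) and $\alpha(G)$ is the independence number. A graph $G$ is called stable if every root $z$ of $i(G,x)$ satisfies $\mathrm{Re}(z)\leq 0$. $K_{a,b}$ denotes the complete bipartite graph with parts of sizes $a$ and $b$; its independence polynomial is $(1+x)^a+(1+x)^b-1$. *)

(* Defs.v *)
From HB Require Import structures.
From mathcomp Require Import all_boot all_order all_algebra all_field.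
Set Implicit Arguments. Unset Strict Implicit. Unset Printing Implicit Defensive.
Import Order.TTheory GRing.Theory Num.Theory.
Local Open Scope ring_scope.

Definition simple_graph (T : finType) (e : rel T) : Prop :=
  symmetric e /\ irreflexive e.

Definition independent (T : finType) (e : rel T) (S : {set T}) : bool :=
  [forall x in S, forall y in S, ~~ e x y].

Definition indep_poly (T : finType) (e : rel T) : {poly algC} :=
  \sum_(S : {set T} | independent e S) 'X^#|S|.

Definition stable (T : finType) (e : rel T) : Prop :=
  forall z : algC, root (indep_poly e) z -> 'Re z <= 0.

Definition Kab_rel (a b : nat) : rel ('I_a + 'I_b)%type :=
  fun x y => match x, y with
             | inl _, inr _ => true
             | inr _, inl _ => true
             | _, _ => false
             end.
Arguments Kab_rel a b : clear implicits.

(* Main.v *)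
Require Import Defs.
From mathcomp Require Import all_boot all_order all_algebra all_field.
From mathcomp Require Import ring lra zify.
Import Order.TTheory GRing.Theory Num.Theory.
Set Implicit Arguments. Unset Strict Implicit. Unset Printing Implicit Defensive.

Definition tri (n a : nat) : nat := minn a.+1 (n + n - 1 - a).
Definition tri' (n a : nat) : nat := if a is a'.+1 then tri n a' else 0.

Lemma sumsq_lb (n : nat) : (n ^ 3 <= 3 * \sum_(i < n) (i.+1 * i.+1))%N.
Proof.
elim: n => [|n IH]; first by [].
rewrite big_ord_recr /=; move: IH; rewrite !expnS expn0.
move: (\sum_(i < n) _)%N => X; nia.
Qed.

Lemma tri_S_lb (n : nat) : (n ^ 3 <= 3 * \sum_(a < n + n) (tri n a * tri n a))%N.
Proof.
apply: leq_trans (sumsq_lb n) _; rewrite leq_mul2l /=.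
rewrite big_split_ord /= -[X in (X <= _)%N]addn0 leq_add //.
apply: eq_leq; apply: eq_bigr => i _ /=; rewrite /tri.
have := ltn_ord i; move: (nat_of_ord i) => a ha.
have -> : minn a.+1 (n + n - 1 - a) = a.+1 by lia.
done.
Qed.

Lemma tri_S_ub (n : nat) : (0 < n)%N ->
  (\sum_(a < n + n) (tri n a * tri n a) <=
   \sum_(a < n + n) (tri' n a * tri n a) + n)%N.
Proof.
move=> n0.
have E : (\sum_(a < n + n) (tri' n a * tri' n a) = \sum_(a < n + n) (tri n a * tri n a))%N.
  have -> : (n + n = (n + n - 1).+1)%N by lia.
  rewrite big_ord_recl big_ord_recr /= add0n.
  have -> : tri n (n + n - 1) = 0%N by rewrite /tri; lia.
  by rewrite muln0 addn0.
rewrite -(leq_pmul2l (isT : (0 < 2)%N)) mulnDr.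
have -> : (2 * \sum_(a < n + n) (tri n a * tri n a) =
   \sum_(a < n + n) (tri n a * tri n a + tri' n a * tri' n a))%N.
  by rewrite big_split /= E mul2n -addnn.
have -> : (2 * n = \sum_(a < n + n) 1)%N by rewrite sum_nat_const card_ord muln1; lia.
rewrite big_distrr /= -big_split /=; apply: leq_sum => a _.
move: (nat_of_ord a) => x; case: x => [|x]; rewrite /tri' /tri /=.
  have : (minn 1 (n + n - 1 - 0) <= 1)%N by lia.
  move: (minn 1 _) => A; nia.
have : (minn x.+2 (n + n - 1 - x.+1) <= minn x.+1 (n + n - 1 - x) + 1)%N by lia.
have : (minn x.+1 (n + n - 1 - x) <= minn x.+2 (n + n - 1 - x.+1) + 1)%N by lia.
move: (minn x.+2 _) (minn x.+1 _) => A B; nia.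
Qed.

Local Open Scope ring_scope.

Lemma sum_subsets (T : finType) (A : {set T}) (z : algC) :
  \sum_(S : {set T} | S \subset A) z ^+ #|S| = (1 + z) ^+ #|A|.
Proof.
have -> : (1 + z) ^+ #|A| = \prod_(i : T) (if i \in A then z + 1 else 1).
  by rewrite -big_mkcond /= prodr_const addrC.
have E : forall i : T, (if i \in A then z + 1 else 1)
    = (if i \in A then z else 0) + 1.
  by move=> i; case: (i \in A); rewrite ?add0r.
rewrite (eq_bigr _ (fun i _ => E i)) bigA_distr /= big_mkcond /=.
apply: eq_bigr => S _.
rewrite -big_mkcond /=.
case: (boolP (S \subset A)) => SA.
  rewrite -prodr_const; apply: eq_bigr => i iS.
  by rewrite (subsetP SA i iS).
case/subsetPn: SA => i iS iA.
by rewrite (bigD1 i) //= (negbTE iA) mul0r.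
Qed.

Lemma indep_Kab (m k : nat) (S : {set ('I_m + 'I_k)%type}) :
  independent (Kab_rel m k) S =
  (S \subset [set inl x | x : 'I_m]) || (S \subset [set inr x | x : 'I_k]).
Proof.
apply/idP/idP.
  move=> /forallP H.
  apply/negPn/negP; rewrite negb_or => /andP [/subsetPn [x xS xL] /subsetPn [y yS yR]].
  have := H x; rewrite xS /= => /forallP /(_ y); rewrite yS /=.
  case: x xS xL => [a|a] xS xL; first by rewrite imset_f in xL.
  case: y yS yR => [b|b] yS yR; last by rewrite imset_f in yR.
  done.
case/orP => /subsetP H; apply/forallP => x; apply/implyP => xS;
  apply/forallP => y; apply/implyP => yS.
  move: (H x xS) (H y yS) => /imsetP [a _ ->] /imsetP [b _ ->]; done.
move: (H x xS) (H y yS) => /imsetP [a _ ->] /imsetP [b _ ->]; done.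
Qed.

Lemma horner_indep_Kab (m k : nat) (z : algC) :
  (indep_poly (Kab_rel m k)).[z] = (1 + z) ^+ m + (1 + z) ^+ k - 1.
Proof.
rewrite /indep_poly horner_sum.
under eq_bigr do rewrite hornerXn.
pose L := [set inl x | x : 'I_m] : {set ('I_m + 'I_k)%type}; pose R := [set inr x | x : 'I_k] : {set ('I_m + 'I_k)%type}.
have cL : #|L| = m by rewrite card_imset ?card_ord //; move=> a b [].
have cR : #|R| = k by rewrite card_imset ?card_ord //; move=> a b [].
have EL := sum_subsets L z; have ER := sum_subsets R z.
rewrite cL in EL; rewrite cR in ER; rewrite -EL -ER.
under eq_bigl do rewrite indep_Kab.
rewrite big_mkcond /= [X in _ = X + _ - _]big_mkcond [X in _ = _ + X - _]big_mkcond /=.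
have -> : 1 = \sum_(S : {set ('I_m + 'I_k)%type}) (if (S \subset L) && (S \subset R) then z ^+ #|S| else 0).
  rewrite -big_mkcond /= (big_pred1 set0) ?cards0 ?expr0 //.
  move=> S /=; apply/andP/eqP => [[SL SR]|->]; last by rewrite !sub0set.
  apply/eqP; rewrite -subset0; apply/subsetP => x xS.
  move: (subsetP SL x xS) (subsetP SR x xS) => /imsetP [a _ ->] /imsetP [b _].
  done.
rewrite -big_split -sumrB /=; apply: eq_bigr => S _.
by case: (S \subset L); case: (S \subset R); rewrite /= ?addr0 ?subr0 ?add0r ?addrK ?subrr.
Qed.

Lemma rat_split (l : rat) : 1 < l -> exists P Q : nat,
  [/\ (0 < Q)%N, (Q < P)%N & forall m k : nat, l * m%:R = k%:R ->
      exists t, m = (Q * t)%N /\ k = (P * t)%N].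
Proof.
move=> l1.
have l0 : 0 < l by apply: lt_trans l1.
have hP : (`|numq l|%N)%:Z = numq l by rewrite abszE ger0_norm // ltW // numq_gt0.
have hQ : (`|denq l|%N)%:Z = denq l by rewrite abszE ger0_norm // ltW.
have nE := numqE l.
exists `|numq l|%N, `|denq l|%N; split.
- by rewrite -ltz_nat hQ.
- rewrite -ltz_nat hP hQ -(ltr_int rat) nE.
  by rewrite ltr_pMl // ltr0z.
move=> m k lm.
have E : (`|numq l| * m)%N = (k * `|denq l|)%N.
  apply/eqP; rewrite -(eqr_nat rat) !natrM.
  have -> : ((`|numq l|%N)%:R : rat) = (numq l)%:~R by rewrite -hP.
  have -> : ((`|denq l|%N)%:R : rat) = (denq l)%:~R by rewrite -hQ.
  by rewrite nE mulrAC lm.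
have cop := coprime_num_den l.
have dv : (`|denq l| %| m)%N.
  by rewrite -(@Gauss_dvdr _ `|numq l| m) ?E ?dvdn_mull // coprime_sym.
exists (m %/ `|denq l|)%N; split; first by rewrite mulnC divnK.
have Q0 : (0 < `|denq l|)%N by rewrite -ltz_nat hQ.
apply/eqP; rewrite -(eqn_pmul2r Q0) -E.
by rewrite -mulnA (divnK dv).
Qed.

Lemma prod_le1_eq1 (R : numDomainType) (rs : seq R) :
  (forall x, x \in rs -> 0 <= x <= 1) -> \prod_(x <- rs) x = 1 ->
  forall x, x \in rs -> x = 1.
Proof.
elim: rs => [|a rs IH] //= H; rewrite big_cons => E x.
have /andP [a0 a1] := H a (mem_head _ _).
have Pr : 0 <= \prod_(y <- rs) y <= 1.
  have H' : forall y, y \in rs -> 0 <= y <= 1.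
    by move=> y yr; apply: H; rewrite in_cons yr orbT.
  rewrite big_seq; apply/andP; split; first by apply: prodr_ge0 => y yr; case/andP: (H' y yr).
  by apply: prodr_ile1 => y yr; apply: H'.
case/andP: Pr => P0 P1.
have aE : a = 1.
  have : a * \prod_(y <- rs) y <= a * 1 := ler_wpM2l a0 P1.
  by rewrite mulr1 E => h; apply/eqP; rewrite eq_le a1 h.
have PE : \prod_(y <- rs) y = 1 by rewrite aE mul1r in E.
rewrite in_cons => /orP [/eqP ->//|xr].
apply: IH => // y yr; apply: H; by rewrite in_cons yr orbT.
Qed.

Lemma prod_const_seq (R : comNzRingType) (T : Type) (rs : seq T) (h : R) :
  \prod_(z <- rs) h = h ^+ size rs.
Proof. by elim: rs => [|a rs IH]; rewrite ?big_nil ?big_cons ?IH ?exprS. Qed.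

Lemma exists_big_root (p q : nat) : (0 < q)%N -> (q < p)%N ->
  exists u : algC, u ^+ p + u ^+ q = 1 /\ 1 < `|u|.
Proof.
move=> q0 qp.
pose f : {poly algC} := 'X^p + ('X^q - 1).
have sz1 : size ('X^q - 1 : {poly algC}) = q.+1 by rewrite size_Xn_sub_1.
have szf : size f = p.+1 by rewrite /f size_polyDl size_polyXn // sz1.
have lcf : lead_coef f = 1 by rewrite /f lead_coefDl ?lead_coefXn // size_polyXn sz1.
have [rs frs] := closed_field_poly_normal f.
rewrite lcf scale1r in frs.
have szr : size rs = p.
  by have := size_prod_XsubC rs id; rewrite -frs szf => -[].
have fx : forall x, f.[x] = x ^+ p + x ^+ q - 1.
  by move=> x; rewrite /f !hornerE ?addrA.
have fr : forall x, f.[x] = \prod_(z <- rs) (x - z).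
  by move=> x; rewrite frs horner_prod; apply: eq_bigr => z _; rewrite hornerXsubC.
case: (boolP (has (fun z => 1 < `|z|) rs)).
  case/hasP => z zr z1; exists z; split => //.
  have : root f z by rewrite frs root_prod_XsubC.
  by rewrite /root fx subr_eq0 => /eqP.
move/hasPn => Hr.
have Hle : forall z, z \in rs -> `|z| <= 1.
  by move=> z zr; have := Hr z zr; rewrite real_leNgt ?realE ?normr_ge0 ?ler01.
have prod1 : \prod_(z <- rs) `|z| = 1.
  have p0 : (p == 0%N) = false by apply/negbTE; rewrite -lt0n (ltn_trans q0 qp).
  have q0' : (q == 0%N) = false by apply/negbTE; rewrite -lt0n q0.
  have := fr 0; rewrite fx !expr0n p0 q0' /= ?add0r ?sub0r.
  move/(congr1 Num.norm); rewrite normrN normr1 normr_prod => E; rewrite [RHS]E.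
  by apply: eq_bigr => z _; rewrite sub0r normrN.
have N1 : forall z, z \in rs -> `|z| = 1.
  move=> z zr.
  have H := @prod_le1_eq1 _ (map Num.norm rs).
  rewrite big_map in H; apply: H => //; last by apply: map_f.
  by move=> x /mapP [y yr ->]; rewrite normr_ge0 Hle.
have cz : forall z, z \in rs -> z^* * z = 1.
  by move=> z zr; rewrite mulrC -normCK N1 // expr1n.
pose c := \prod_(z <- rs) (- z^*).
have E1 : (f.[1])^* = c * f.[1].
  rewrite fr rmorph_prod /c -big_split /= !big_seq; apply: eq_bigr => z zr.
  rewrite rmorphB rmorph1 mulrBr mulr1 mulNr cz //; ring.
pose h : algC := 2^-1.
have h2 : h * 2 = 1 by rewrite mulVf // pnatr_eq0.
have hc : h^* = h by rewrite /h fmorphV rmorph_nat.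
have E2 : (f.[h])^* = h ^+ p * c * f.[2].
  rewrite !fr rmorph_prod /c -szr -prod_const_seq -!big_split /= !big_seq.
  apply: eq_bigr => z zr.
  rewrite rmorphB; change (h^* - z^* = h * - z^* * (2 - z)); rewrite hc.
  have -> : h * - z^* * (2 - z) = -(z^*) * (h * 2) + h * (z^* * z) by ring.
  by rewrite h2 cz //; ring.
have c1 : c = 1.
  move: E1; rewrite fx !expr1n addrK rmorph1 mulr1 => <-; done.
have hR : h \is Num.real by rewrite /h rpredV rpred_nat.
move: E2; rewrite c1 mulr1 !fx conj_Creal; last by rewrite rpredB ?rpredD ?rpredX ?rpred1.
rewrite /h !exprVn.
have pE : (2 : algC) ^+ p = 2 ^+ (p - q) * 2 ^+ q by rewrite -exprD subnK // ltnW.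
rewrite pE.
set A := (2 : algC) ^+ (p - q); set B := (2 : algC) ^+ q => X.
have A0 : A != 0 by rewrite expf_neq0 // pnatr_eq0.
have B0 : B != 0 by rewrite expf_neq0 // pnatr_eq0.
have key : 2 + A - (2 * A * B + B) = ((A*B)^-1 + B^-1 - 1 - (A*B)^-1*(A*B+B-1)) * (A*B).
  by field; rewrite A0 B0.
rewrite X subrr mul0r in key; move/eqP: key.
rewrite subr_eq0 /A /B -!natrX -!natrM -!natrD eqr_nat => /eqP key.
have Yp : (0 < 2 ^ q)%N by rewrite expn_gt0.
have Xp : (2 <= 2 ^ (p - q))%N.
  by rewrite -{1}(expn1 2) leq_exp2l // subn_gt0.
move: key Yp Xp; generalize (2 ^ (p - q))%N (2 ^ q)%N => x y; nia.
Qed.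

Lemma unit_conj (x : algC) : `|x| = 1 -> x^* = x^-1.
Proof. by move=> h; rewrite invC_norm h expr1n invr1 mul1r. Qed.

Lemma geom_sum0 (x : algC) (t : nat) : x ^+ t = 1 -> x != 1 ->
  \sum_(j < t) x ^+ j = 0.
Proof.
move=> xt x1; have := subrX1 x t; rewrite xt subrr => /esym /eqP.
by rewrite mulf_eq0 subr_eq0 (negbTE x1) /= => /eqP.
Qed.

Lemma ortho (t : nat) (z v0 : algC) : (0 < t)%N -> t.-primitive_root z ->
  `|v0| = 1 -> forall a b : nat, (a < t)%N -> (b < t)%N ->
  \sum_(j < t) (v0 * z ^+ j) ^+ a * ((v0 * z ^+ j)^*) ^+ b
    = if a == b then t%:R else 0.
Proof.
move=> t0 pz v01 a b at0 bt0.
have zt : z ^+ t = 1 := prim_expr_order pz.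
have z1 : `|z| = 1.
  apply/eqP; rewrite -(pexpr_eq1 t0) ?normr_ge0 // -normrX zt normr1 //.
have nj : forall j : nat, `|v0 * z ^+ j| = 1.
  by move=> j; rewrite normrM normrX z1 v01 expr1n mulr1.
have nz : forall j : nat, v0 * z ^+ j != 0.
  by move=> j; rewrite -normr_eq0 nj oner_eq0.
under eq_bigr do rewrite unit_conj ?nj // exprVn.
case: eqP => [<-|ab].
  under eq_bigr do rewrite mulfV ?expf_neq0 ?nz //.
  by rewrite sumr_const card_ord.
have z0 : z != 0 by rewrite -normr_eq0 z1 oner_eq0.
have v00 : v0 != 0 by rewrite -normr_eq0 v01 oner_eq0.
pose x := z ^+ a / z ^+ b.
have E : forall j : nat, (v0 * z ^+ j) ^+ a / (v0 * z ^+ j) ^+ b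
   = (v0 ^+ a / v0 ^+ b) * x ^+ j.
  move=> j; rewrite /x !exprMn invfM mulrACA; congr (_ * _).
  by rewrite exprAC [z ^+ j ^+ b]exprAC exprVn.
under eq_bigr do rewrite E.
rewrite -mulr_sumr geom_sum0 ?mulr0 //.
  by rewrite /x exprMn exprVn -!exprM mulnC [(b * t)%N]mulnC !exprM zt !expr1n invr1 mulr1.
rewrite /x; apply/negP => /eqP h.
have : z ^+ a = z ^+ b.
  by move/(congr1 (fun y => y * z ^+ b)): h; rewrite divfK ?mul1r // expf_neq0.
move/eqP; rewrite (eq_prim_root_expr pz) !modn_small // => /eqP; done.
Qed.

Lemma parseval (t N : nat) (z v0 : algC) (al be : nat -> algC) :
  (0 < t)%N -> t.-primitive_root z -> `|v0| = 1 -> (N <= t)%N ->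
  \sum_(j < t) (\sum_(a < N) al a * (v0 * z ^+ j) ^+ a) *
               (\sum_(b < N) be b * (v0 * z ^+ j) ^+ b)^*
  = t%:R * \sum_(a < N) al a * (be a)^*.
Proof.
move=> t0 pz v01 Nt.
have E : forall j : 'I_t, (\sum_(a < N) al a * (v0 * z ^+ j) ^+ a) *
               (\sum_(b < N) be b * (v0 * z ^+ j) ^+ b)^*
   = \sum_(a < N) \sum_(b < N) (al a * (be b)^*) *
        ((v0 * z ^+ j) ^+ a * ((v0 * z ^+ j)^*) ^+ b).
  move=> j; rewrite rmorph_sum mulr_suml; apply: eq_bigr => a _.
  rewrite mulr_sumr; apply: eq_bigr => b _.
  rewrite rmorphM rmorphXn /=; ring.
rewrite (eq_bigr _ (fun j _ => E j)) exchange_big /= mulr_sumr.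
apply: eq_bigr => a _; rewrite exchange_big /=.
under eq_bigr do rewrite -mulr_sumr.
under eq_bigr => b _ do rewrite (ortho t0 pz v01 (leq_trans (ltn_ord a) Nt) (leq_trans (ltn_ord b) Nt)).
rewrite (bigD1 a) //= eqxx big1 ?addr0; first by rewrite mulrC.
by move=> b /negbTE ba; rewrite eq_sym (inj_eq val_inj) ba mulr0.
Qed.

Lemma bernoulli (R : numDomainType) (s : R) (n : nat) : 0 <= s -> s <= 1 ->
  1 - n%:R * (1 - s) <= s ^+ n.
Proof.
move=> s0 s1; elim: n => [|n IH]; first by rewrite mul0r subr0 expr0.
have E : 1 - n.+1%:R * (1 - s) = s * (1 - n%:R * (1 - s)) - n%:R * (1 - s) ^+ 2.
  by rewrite -natr1; ring.
rewrite E [s ^+ n.+1]exprS; apply: le_trans; last exact: (ler_wpM2l s0 IH).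
by rewrite lerBlDr lerDl mulr_ge0 ?ler0n ?exprn_ge0 ?subr_ge0.
Qed.

Lemma final_contra (R : numFieldType) (x b : R) (t n S T1 : nat) :
  0 <= x -> b <= t%:R * x -> T1%:R <= (1 - x) * S%:R ->
  (S <= T1 + n)%N -> (n ^ 3 <= 3 * S)%N -> (t <= 3 * n)%N ->
  9 < b * n%:R -> False.
Proof.
move=> x0 bx T1S SnT n3 tn bn.
have n0 : (0 < n)%N.
  case: n {SnT n3 tn} bn => [|n] //; rewrite mulr0 => h.
  by have := lt_trans (ltr0n R 9) h; rewrite ltxx.
have b0 : 0 < b.
  have : 0 < b * n%:R by apply: lt_trans bn; rewrite ltr0n.
  by rewrite pmulr_lgt0 // ltr0n.
have xS : x * S%:R <= n%:R.
  have : S%:R <= T1%:R + n%:R :> R by rewrite -natrD ler_nat.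
  move=> h; have := le_trans h (lerD T1S (lexx n%:R)).
  by rewrite mulrBl mul1r -addrA lerDl addrC subr_ge0.
have bS : b * S%:R <= (3 * n * n)%:R.
  apply: le_trans (_ : (t%:R * x) * S%:R <= _).
    by apply: ler_wpM2r; rewrite ?ler0n.
  rewrite -mulrA; apply: le_trans (_ : t%:R * n%:R <= _).
    by apply: ler_wpM2l; rewrite ?ler0n.
  by rewrite -natrM ler_nat leq_mul2r tn orbT.
have : b * (n ^ 3)%:R <= b * (3 * S)%:R by apply: (ler_wpM2l (ltW b0)); rewrite ler_nat.
rewrite natrM mulrCA.
move=> h; have := le_trans h (ler_wpM2l (ler0n _ 3) bS).
have -> : (n ^ 3)%:R = n%:R * (n * n)%:R :> R by rewrite natrX natrM; ring.
rewrite mulrA => h2.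
have : 9 * (n * n)%:R < b * n%:R * (n * n)%:R :> R.
  by rewrite ltr_pM2r // ltr0n muln_gt0 n0.
move=> h3; have := lt_le_trans h3 h2.
have -> : (3 : R) * (3 * n * n)%:R = 9 * (n * n)%:R.
  by rewrite !natrM; ring.
by rewrite ltxx.
Qed.

Lemma shift_lemma (n : nat) (x : algC) : (0 < n)%N ->
  x * \sum_(a < n + n) (tri n a)%:R * x ^+ a = \sum_(a < n + n) (tri' n a)%:R * x ^+ a.
Proof.
move=> n0.
have tl : tri n (n + n - 1) = 0%N by rewrite /tri; lia.
move: tl; case E: (n + n)%N => [|N]; first by lia.
have -> : (N.+1 - 1 = N)%N by lia.
move=> tl.
rewrite mulr_sumr [in LHS]big_ord_recr [in RHS]big_ord_recl /= tl mul0r mulr0 addr0 mul0r add0r.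
by apply: eq_bigr => i _; rewrite exprS; ring.
Qed.

Lemma big_root_re (u : algC) : 1 < `|u| ->
  exists T0 : nat, forall t : nat, (T0 < t)%N -> exists w : algC, w ^+ t = u /\ 1 < 'Re w.
Proof.
move=> u1.
set M := `|u|.
have M0 : 0 < M := lt_trans ltr01 u1.
have M0' : M != 0 by rewrite gt_eqF.
set b := 1 - M^-1.
have b0 : 0 < b by rewrite subr_gt0 invf_lt1.
set K := Num.Def.archi_bound (9 / b).
have hK : 9 / b < K%:R by apply: archi_boundP; rewrite divr_ge0 ?ler0n ?ltW.
exists (K + K + 1)%N => t tT.
have t0 : (0 < t)%N by lia.
have [z pz] := C_prim_root_exists t0.
set v := u / M.
have v1 : `|v| = 1 by rewrite /v normrM normfV /M normr_id mulfV.
set v0 := t.-root v.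
have v01 : `|v0| = 1 by rewrite /v0 norm_rootC v1 rootC1.
set s := t.-root (M^-1).
have s0 : 0 < s by rewrite rootC_gt0 // invr_gt0.
have st : s ^+ t = M^-1 by rewrite rootCK.
have s1 : s <= 1 by rewrite rootC_le1 ?invf_le1 ?invr_ge0 ?ltW.
have sR : s \is Num.real by rewrite ger0_real // ltW.
have sR' : s^-1 \is Num.real by rewrite rpredV.
have wt : forall j : nat, (v0 * z ^+ j / s) ^+ t = u.
  move=> j; rewrite exprMn exprVn st invrK exprMn /v0 rootCK //.
  rewrite -exprM mulnC exprM (prim_expr_order pz) expr1n mulr1 /v divfK //.
case: (boolP [exists j : 'I_t, 1 < 'Re (v0 * z ^+ j / s)]).
  by case/existsP => j hj; exists (v0 * z ^+ j / s); split => //; apply: wt.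
move/existsPn => Hall; exfalso.
have Hre : forall j : 'I_t, 'Re (v0 * z ^+ j) <= s.
  move=> j; have := Hall j; rewrite -real_leNgt ?Creal_Re ?real1 //.
  by rewrite (ReMr sR') ler_pdivrMr // mul1r.
set n := t./2.
have n0 : (0 < n)%N by rewrite /n; lia.
have Nt : (n + n <= t)%N by rewrite /n; lia.
have t3n : (t <= 3 * n)%N by rewrite /n; lia.
have Kn : (K <= n)%N by rewrite /n; lia.
have nK : 9 < b * n%:R.
  rewrite -ltr_pdivrMl // mulrC; apply: (lt_le_trans hK); by rewrite ler_nat.
pose pc := fun a : nat => ((tri n a)%:R : algC).
pose pc' := fun a : nat => ((tri' n a)%:R : algC).
pose P := fun j : nat => \sum_(a < n + n) pc a * (v0 * z ^+ j) ^+ a.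
have shift : forall j : nat, (v0 * z ^+ j) * P j
    = \sum_(a < n + n) pc' a * (v0 * z ^+ j) ^+ a.
  by move=> j; rewrite /P /pc /pc' shift_lemma.
have Par1 := @parseval t (n + n) z v0 pc pc t0 pz v01 Nt.
have Par2 := @parseval t (n + n) z v0 pc' pc t0 pz v01 Nt.
have cj : forall a, (pc a)^* = pc a by move=> a; rewrite /pc conjC_nat.
set S := (\sum_(a < n + n) tri n a * tri n a)%N.
set T1 := (\sum_(a < n + n) tri' n a * tri n a)%N.
have eS : \sum_(a < n + n) pc a * (pc a)^* = S%:R.
  by rewrite /S natr_sum; apply: eq_bigr => a _; rewrite cj natrM.
have eT : \sum_(a < n + n) pc' a * (pc a)^* = T1%:R.
  by rewrite /T1 natr_sum; apply: eq_bigr => a _; rewrite cj natrM.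
have HP : forall j, P j * (P j)^* = `|P j| ^+ 2 by move=> j; rewrite normCK.
have HPR : forall j, `|P j| ^+ 2 \is Num.real by move=> j; rewrite rpredX ?normr_real.
have key : t%:R * T1%:R <= s * (t%:R * S%:R).
  have ReT : 'Re (t%:R * T1%:R : algC) = t%:R * T1%:R.
    by apply/Creal_ReP; rewrite rpredM ?rpred_nat.
  rewrite -ReT -eT -Par2 -eS -Par1 raddf_sum mulr_sumr.
  apply: ler_sum => j _.
  rewrite -/(P j) -shift -(mulrA (v0 * z ^+ j)) HP.
  change ('Re (v0 * z ^+ j * `|P j| ^+ 2) <= s * `|P j| ^+ 2).
  rewrite (ReMr (HPR j)).
  by apply: ler_wpM2r; [rewrite exprn_ge0 ?normr_ge0 | apply: Hre].
have T1S : T1%:R <= s * S%:R.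
  by move: key; rewrite mulrCA ler_pM2l // ltr0n.
have bb := bernoulli t (ltW s0) s1.
rewrite st lerBlDr addrC -lerBlDr in bb.
apply: (@final_contra _ (1 - s) b t n S T1).
- by rewrite subr_ge0.
- exact: bb.
- by rewrite subKr.
- exact: tri_S_ub.
- exact: tri_S_lb.
- exact: t3n.
- exact: nK.
Qed.

Theorem theorem4 :
  forall l : rat, 1 < l ->
  exists N : nat, forall m k : nat, (N < m)%N ->
    l * m%:R = k%:R ->
    ~ stable (Kab_rel m k).
Proof.
move=> l l1.
have [P [Q [Q0 QP Hmk]]] := rat_split l1.
have [u [uE u1]] := exists_big_root Q0 QP.
have [T0 HT] := big_root_re u1.
exists (Q * T0)%N => m k mN lm.
have [t [mE kE]] := Hmk m k lm.
have tT : (T0 < t)%N by rewrite -(ltn_pmul2l Q0) -mE.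
have [w [wt w1]] := HT t tT.
move=> st.
have rt : root (indep_poly (Kab_rel m k)) (w - 1).
  rewrite /root horner_indep_Kab; have -> : 1 + (w - 1) = w by rewrite addrC subrK.
  rewrite mE kE mulnC [(P * t)%N]mulnC !exprM wt.
  by rewrite [u ^+ Q + _]addrC uE subrr.
have := st _ rt.
rewrite raddfB /= (Creal_ReP 1 _) ?real1 // subr_le0 => h.
by have := lt_le_trans w1 h; rewrite ltxx.
Qed.
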